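(* Every matroid $M$, regarded as the set system of its independent sets, belongs to the class $\mathfrak{J}_+$. That is, all coefficients $j_k$ ($0\le k\le t_M$) of its $J$-polynomial $J_M(u)=\sum_k j_ku^k$ are nonnegative.
   Context: A set system $\Omega$ on a finite set $E$ is a nonempty collection of subsets of $E$ (its faces). Define: - $d_\Omega=\max\{\#S:S\in\Omega\}$; - $f_i$ is the number of faces of size $i$; - $F_\Omega(z)=\sum_{i=0}^d f_iz^i$. Factor $F_\Omega(z)=(1+z)^{d-t}\widetilde F_\Omega(z)$ with $\widetilde F_\Omega(-1)\ne0$, where $t=t_\Omega=\deg\widetilde F_\Omega$. The $J$-polynomial is $J_\Omega(u)=(-2)^t\widetilde F_\Omega\big(\frac{-1-u}{2}\big)=\sum_{k=0}^t j_ku^k$. The class $\mathfrak{J}_+$ consists of the set systems with $j_k\ge0$ for all $0\le k\le t_\Omega$. *)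

(* Defs.v *)
From mathcomp Require Import all_boot all_order all_algebra.
Set Implicit Arguments. Unset Strict Implicit. Unset Printing Implicit Defensive.
Import Order.TTheory GRing.Theory Num.Theory.
Local Open Scope ring_scope.

Definition set_system (T : finType) (Om : {set {set T}}) : Prop := Om != set0.

Definition is_matroid (T : finType) (I : {set {set T}}) : Prop :=
  [/\ set0 \in I,
      (forall A B : {set T}, B \in I -> A \subset B -> A \in I) &
      (forall A B : {set T}, A \in I -> B \in I -> #|A| < #|B| ->
         exists2 x, x \in B :\: A & x |: A \in I)]%N.

Definition dOm (T : finType) (Om : {set {set T}}) : nat := \max_(S in Om) #|S|.

Definition fcoef (T : finType) (Om : {set {set T}}) (i : nat) : nat :=
  #|[set S in Om | #|S| == i]|.

Definition FOm (T : finType) (Om : {set {set T}}) : {poly rat} :=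
  \sum_(i < (dOm Om).+1) (fcoef Om i)%:R *: 'X^i.

(* F = (1+z)^(d-t) * Ftilde with Ftilde(-1) != 0: the exponent d - t is the
   multiplicity of -1 as a root of F. *)
Definition Ftilde (T : finType) (Om : {set {set T}}) : {poly rat} :=
  FOm Om %/ ('X + 1) ^+ (mup (-1) (FOm Om)).

Definition tOm (T : finType) (Om : {set {set T}}) : nat := (size (Ftilde Om)).-1.

Definition JOm (T : finType) (Om : {set {set T}}) : {poly rat} :=
  (-2) ^+ tOm Om *: (Ftilde Om \Po ((-1 - 'X) / 2%:P)).

Definition in_Jplus (T : finType) (Om : {set {set T}}) : Prop :=
  forall k : nat, (k <= tOm Om)%N -> 0 <= (JOm Om)`_k.

(* Main.v *)
Require Import Defs.
From mathcomp Require Import all_boot all_order all_algebra.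
From mathcomp Require Import ring.
Set Implicit Arguments. Unset Strict Implicit. Unset Printing Implicit Defensive.
Import Order.TTheory GRing.Theory Num.Theory.

Section Mat.
Variable T : finType.
Implicit Types (I : {set {set T}}) (A B : {set T}).

Definition del (e : T) I := [set A in I | e \notin A].
Definition con (e : T) I := [set A in I | (e \notin A) && (e |: A \in I)].
Definition rk I r := (forall A, A \in I -> #|A| <= r)%N /\ exists2 B, B \in I & #|B| = r.
Definition cfb I r := [forall x, [exists B in I, (#|B| == r) && (x \notin B)]].
Definition nl I := [set x : T | [set x] \in I].

Lemma mat_sub I A B : is_matroid I -> A \in I -> B \subset A -> B \in I.
Proof. by case=> _ H _ HA HB; apply: H HA HB. Qed.

Lemma mat_ext I A B : is_matroid I -> A \in I -> B \in I -> (#|A| <= #|B|)%N ->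
  exists2 A', A' \in I & [/\ A \subset A', A' \subset A :|: B & #|A'| = #|B|].
Proof.
move=> M; move: M (M) => [_ _ Aug] M.
move: {2}(#|B| - #|A|)%N (erefl (#|B| - #|A|)%N) => k; elim: k A => [|k IH] A Hk HA HB HAB.
  exists A => //; split => //; [exact: subsetUl | apply/eqP; rewrite eqn_leq HAB; move/eqP: Hk; rewrite subn_eq0 //].
have lt : (#|A| < #|B|)%N by rewrite -subn_gt0 Hk.
have [x /setDP [xB xA] HxA] := Aug A B HA HB lt.
have Hk' : (#|B| - #|x |: A| = k)%N by rewrite cardsU1 xA /= add1n subnS Hk.
have HxB : (#|x |: A| <= #|B|)%N by rewrite cardsU1 xA.
have [A' HA' [s1 s2 s3]] := IH _ Hk' HxA HB HxB.
exists A' => //; split => //.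
  by apply: subset_trans s1; exact: subsetUr.
apply: (subset_trans s2); apply/subsetP => y; rewrite !inE => /orP [/orP[/eqP->|->]|->] //.
  by rewrite xB !orbT.
by rewrite orbT.
Qed.


Lemma mat_del I e : is_matroid I -> is_matroid (del e I).
Proof.
move=> [H0 Hs Ha]; split.
- by rewrite inE H0 inE.
- move=> A B; rewrite !inE => /andP [HB eB] AB; rewrite (Hs A B) //=.
  by apply: contra eB => /(subsetP AB).
- move=> A B; rewrite !inE => /andP [HA eA] /andP [HB eB] lt.
  have [x xBA HxA] := Ha A B HA HB lt.
  exists x => //; rewrite !inE HxA /= negb_or eA andbT.
  by apply/eqP => ex; move: eB; rewrite ex; case/setDP: xBA => ->.
Qed.

Lemma mat_con I e : is_matroid I -> [set e] \in I -> is_matroid (con e I).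
Proof.
move=> M; move: M (M) => [H0 Hs Ha] M He; split.
- by rewrite inE H0 inE setU0 He.
- move=> A B; rewrite !inE => /andP [HB /andP [eB HeB]] AB.
  rewrite (Hs A B) //= (Hs (e |: A) (e |: B)) ?setUS // andbT.
  by apply: contra eB => /(subsetP AB).
- move=> A B; rewrite !inE => /andP [HA /andP [eA HeA]] /andP [HB /andP [eB HeB]] lt.
  have lt' : (#|e |: A| < #|e |: B|)%N by rewrite !cardsU1 eA eB.
  have [x xBA HxA] := Ha _ _ HeA HeB lt'.
  move: xBA; rewrite !inE negb_or => /andP [/andP [xe xA] /orP [/eqP xe'|xB]].
    by rewrite xe' eqxx in xe.
  exists x; first by rewrite inE xA.
  rewrite !inE negb_or eq_sym xe eA /=.
  have H2 : e |: (x |: A) \in I by rewrite setUCA.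
  by rewrite H2 andbT; apply: mat_sub M H2 _; apply: subsetUr.
Qed.

Lemma rk_del I r e : is_matroid I -> rk I r -> cfb I r -> rk (del e I) r.
Proof.
move=> M [Hle _] /forallP /(_ e) /existsP [B /andP [HB /andP [/eqP Br eB]]]; split.
  by move=> A; rewrite inE => /andP [/Hle].
by exists B => //; rewrite inE HB.
Qed.

Lemma rk_con I r e : is_matroid I -> rk I r -> [set e] \in I -> rk (con e I) r.-1.
Proof.
move=> M [Hle [B HB Br]] He; split.
  move=> A; rewrite inE => /andP [_ /andP [eA /Hle]]; rewrite cardsU1 eA.
  by case: r {Hle Br} => //.
have Hle1 : (#|[set e]| <= #|B|)%N by rewrite cards1 Br; have := Hle _ He; rewrite cards1.
have [A' HA' [s1 s2 s3]] := mat_ext M He HB Hle1.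
have eA' : e \in A' by apply: (subsetP s1); rewrite inE.
exists (A' :\ e).
  by rewrite inE (mat_sub M HA' (subsetDl _ _)) /= !inE eqxx /= setD1K.
by move: (cardsD1 e A'); rewrite eA' s3 Br add1n => ->.
Qed.

Lemma cf_con I r e : is_matroid I -> rk I r -> cfb I r -> [set e] \in I -> cfb (con e I) r.-1.
Proof.
move=> M [Hle [B0 HB0 B0r]] Hcf He; apply/forallP => x.
have Hle1 : forall B, B \in I -> #|B| = r -> exists2 A', A' \in I & [/\ e \in A', A' \subset e |: B & #|A'| = r].
  move=> B HB Br.
  have Hle1 : (#|[set e]| <= #|B|)%N by rewrite cards1 Br; have := Hle _ He; rewrite cards1.
  have [A' HA' [s1 s2 s3]] := mat_ext M He HB Hle1.
  by exists A' => //; split => //; [apply: (subsetP s1); rewrite inE | rewrite -Br].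
have H : forall A', A' \in I -> e \in A' -> #|A'| = r -> A' :\ e \in con e I /\ #|A' :\ e| = r.-1.
  move=> A' HA' eA' A'r; split.
    by rewrite inE (mat_sub M HA' (subsetDl _ _)) /= !inE eqxx /= setD1K.
  by move: (cardsD1 e A'); rewrite eA' A'r add1n => ->.
case: (eqVneq x e) => [->|xe].
  have [A' HA' [eA' _ A'r]] := Hle1 _ HB0 B0r.
  have [c1 c2] := H _ HA' eA' A'r.
  by apply/existsP; exists (A' :\ e); rewrite c1 c2 eqxx !inE eqxx.
move/forallP: Hcf => /(_ x) /existsP [B /andP [HB /andP [/eqP Br xB]]].
have [A' HA' [eA' s2 A'r]] := Hle1 _ HB Br.
have [c1 c2] := H _ HA' eA' A'r.
apply/existsP; exists (A' :\ e); rewrite c1 c2 eqxx /= !inE negb_and xe /=.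
apply: contra xB => xA'; have := subsetP s2 x xA'; by rewrite !inE (negbTE xe).
Qed.

Lemma nl_del I e : e \in nl I -> (#|nl (del e I)| < #|nl I|)%N.
Proof.
move=> eI; apply: proper_card; apply/properP; split.
  by apply/subsetP => x; rewrite !inE => /andP [].
by exists e => //; rewrite !inE eqxx andbF.
Qed.

Lemma nl_con I e : is_matroid I -> e \in nl I -> (#|nl (con e I)| < #|nl I|)%N.
Proof.
move=> M eI; apply: proper_card; apply/properP; split.
  by apply/subsetP => x; rewrite !inE => /andP [].
by exists e => //; rewrite !inE eqxx andbF.
Qed.


Lemma coloop_ext D r f A : is_matroid D -> rk D r ->
  (forall B, B \in D -> #|B| = r -> f \in B) -> A \in D -> f |: A \in D.
Proof.
move=> M [Hle [B HB Br]] Hf HA.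
have Hl : (#|A| <= #|B|)%N by rewrite Br Hle.
have [A' HA' [s1 _ s3]] := mat_ext M HA HB Hl.
refine (mat_sub M HA' _); rewrite subUset s1 andbT sub1set.
by apply: Hf HA' _; rewrite s3 Br.
Qed.

Lemma coloop_eq D r f : is_matroid D -> rk D r ->
  (forall B, B \in D -> #|B| = r -> f \in B) -> del f D = con f D.
Proof.
move=> M R Hf; apply/setP => A; rewrite !inE.
case: (boolP (A \in D)) => //= HA; case: (f \in A) => //=.
by rewrite (coloop_ext M R Hf HA).
Qed.

Lemma sp_lemma I r e f A : is_matroid I -> rk I r -> cfb I r ->
  (forall B, B \in del e I -> #|B| = r -> f \in B) -> A \in I -> e \notin A -> f \notin A ->
  (e |: A \in I) /\ (f |: A \in I).
Proof.
move=> M R Hcf Hf HA eA fA.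
have MD := mat_del e M; have RD := rk_del e M R Hcf.
have HAD : A \in del e I by rewrite inE HA eA.
have HfA : f |: A \in I by have := coloop_ext MD RD Hf HAD; rewrite inE => /andP [].
split => //.
case: (boolP (e |: A \in I)) => // HeA; exfalso.
move: (RD) => [Hle [B HB Br]].
have Hl : (#|A| <= #|B|)%N by rewrite Br Hle.
have [A'' HA'' [s1 _ s3]] := mat_ext MD HAD HB Hl.
have fA'' : f \in A'' by apply: Hf => //; rewrite s3.
move: HA''; rewrite inE => /andP [HA''I eA''].
set A2 := A'' :\ f.
have HA2 : A2 \in I by apply: mat_sub M HA''I (subsetDl _ _).
have eA2 : e \notin A2 by rewrite inE negb_and eA'' orbT.
have cA2 : #|A''| = (#|A2|).+1 by rewrite (cardsD1 f A'') fA''.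
have HeA2 : e |: A2 \notin I.
  apply: contra HeA => H; apply: mat_sub M H _; apply: setUS.
  apply/subsetP => y yA; rewrite !inE (subsetP s1 _ yA) andbT; apply/eqP => yf; move: fA; by rewrite -yf yA.
move/forallP: Hcf => /(_ f) /existsP [B0 /andP [HB0 /andP [/eqP B0r fB0]]].
have eB0 : e \in B0.
  apply/negPn/negP => eB0; have := Hf B0; rewrite inE HB0 eB0 => /(_ isT B0r).
  by rewrite (negbTE fB0).
have lt : (#|A2| < #|B0|)%N by rewrite B0r -Br -s3 cA2.
case: M (M) => [_ _ Aug] M.
have [x /setDP [xB0 xA2] HxA2] := Aug _ _ HA2 HB0 lt.
have xe : x != e by apply: contraNneq HeA2 => <-.
have xf : x != f by apply: contraNneq fB0 => <-.
have HxD : x |: A2 \in del e I by rewrite inE HxA2 /= in_setU1 negb_or eq_sym xe eA2.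
have := Hf _ HxD; rewrite cardsU1 xA2 add1n -cA2 s3 Br => /(_ erefl).
by rewrite !inE eq_sym (negbTE xf) eqxx.
Qed.

Lemma delcon I r e f : is_matroid I -> rk I r -> cfb I r ->
  (forall B, B \in del e I -> #|B| = r -> f \in B) ->
  del f (con e I) = con f (del e I).
Proof.
move=> M R Hcf Hf.
have [_ [B HB Br]] := rk_del e M R Hcf.
have fB := Hf _ HB Br.
have ef : e != f by apply: contraTneq HB => ->; rewrite inE fB andbF.
apply/setP => A; rewrite !inE.
case: (boolP (A \in I)) => //= HA.
case: (boolP (e \in A)) => //= eA.
case: (boolP (f \in A)) => //= fA; first by rewrite andbF.
have [H1 H2] := sp_lemma M R Hcf Hf HA eA fA.
by rewrite H1 H2 /= orbF ef.
Qed.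

End Mat.

Local Open Scope ring_scope.

Definition qq : {poly rat} := (-1 - 'X) / 2%:P.

Lemma qqE : (-2) *: qq = 'X + 1.
Proof.
rewrite /qq polyCV mulrC mul_polyC scalerA.
have -> : (-2 : rat) * 2^-1 = -1 by rewrite mulNr divff.
by rewrite scaleN1r opprB opprK addrC.
Qed.

Lemma qqE1 : (-2) *: (1 + qq) = 'X - 1.
Proof.
rewrite scalerDr qqE -mul_polyC mulr1 polyCN.
have -> : (2 : rat)%:P = 2 by rewrite polyC_natr.
ring.
Qed.

Definition nonneg (p : {poly rat}) := forall k, 0 <= p`_k.

Lemma nonneg0 : nonneg 0. Proof. by move=> k; rewrite coef0. Qed.
Lemma nonneg1 : nonneg 1. Proof. by move=> k; rewrite coef1; case: (k == 0%N). Qed.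
Lemma nonnegX : nonneg 'X. Proof. by move=> k; rewrite coefX; case: (k == 1%N). Qed.
Lemma nonnegD p q : nonneg p -> nonneg q -> nonneg (p + q).
Proof. by move=> hp hq k; rewrite coefD addr_ge0. Qed.
Lemma nonnegM p q : nonneg p -> nonneg q -> nonneg (p * q).
Proof. by move=> hp hq k; rewrite coefM sumr_ge0 // => i _; rewrite mulr_ge0. Qed.
Lemma nonnegX1 : nonneg ('X + 1). Proof. exact: nonnegD nonnegX nonneg1. Qed.

Fixpoint QR (c : nat) : {poly rat} * {poly rat} :=
  if c is c'.+1 then ('X * (QR c').1 + (QR c').2, 'X * (QR c').2 + (QR c').1) else (0, 1).
Definition Q c := (QR c).1.

Lemma QR_nonneg c : nonneg (QR c).1 /\ nonneg (QR c).2.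
Proof.
elim: c => [|c [h1 h2]] /=; first by split; [exact: nonneg0 | exact: nonneg1].
by split; apply: nonnegD => //; apply: nonnegM => //; exact: nonnegX.
Qed.

Lemma Q_nonneg c : nonneg (Q c). Proof. by case: (QR_nonneg c). Qed.
Lemma Q0 : Q 0 = 0. Proof. by []. Qed.

Lemma QR_sum c : (QR c).1 + (QR c).2 = ('X + 1) ^+ c /\ (QR c).2 - (QR c).1 = ('X - 1) ^+ c.
Proof.
elim: c => [|c [h1 h2]] /=; first by rewrite add0r subr0 !expr0.
rewrite !exprS -h1 -h2; split; ring.
Qed.

Lemma QS c : Q c.+1 = ('X - 1) ^+ c + ('X + 1) * Q c.
Proof.
rewrite /Q /=; have [_ h2] := QR_sum c; rewrite -h2; ring.
Qed.

Section P.
Variable T : finType.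
Implicit Types (I : {set {set T}}) (A B : {set T}).

Definition Fp I : {poly rat} := \sum_(A in I) 'X^#|A|.
Definition G (r : nat) I := ((-2 : rat) ^+ r) *: (Fp I \Po qq).

Lemma Fp_split I e : is_matroid I -> Fp I = Fp (del e I) + 'X * Fp (con e I).
Proof.
move=> M; rewrite /Fp (bigID (fun A => e \in A)) /= addrC; congr (_ + _).
  by apply: eq_bigl => A; rewrite !inE.
rewrite mulr_sumr (reindex_onto (fun A => e |: A) (fun A => A :\ e)) /=; last first.
  by move=> A /andP [_ eA]; rewrite setD1K.
apply: eq_big => A.
  rewrite !inE eqxx /=.
  case: (boolP (e \in A)) => eA /=.
    rewrite andbF; apply/negbTE/andP => [[_ /eqP h]].
    by move: eA; rewrite -h !inE eqxx.
  rewrite setU1K // eqxx !andbT.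
  case: (boolP (e |: A \in I)) => H; last by rewrite andbF.
  by rewrite (mat_sub M H (subsetUr _ _)).
move=> /andP [_ /eqP h]; rewrite -exprS cardsU1.
have eA : e \notin A by rewrite -h !inE eqxx.
by rewrite eA.
Qed.

Lemma Fp0 : Fp set0 = 0. Proof. by rewrite /Fp big_pred0 // => A; rewrite inE. Qed.
Lemma G0 r : G r set0 = 0. Proof. by rewrite /G Fp0 comp_poly0 scaler0. Qed.

Lemma G_split I r e : is_matroid I -> (forall A, A \in I -> #|A| <= r)%N ->
  G r I = G r (del e I) + ('X + 1) * G r.-1 (con e I).
Proof.
move=> M Hle; case: r Hle => [|r] Hle /=.
  have Hc : con e I = set0.
    apply/setP => A; rewrite !inE; apply/negP => /andP [_ /andP [eA H]].
    by have := Hle _ H; rewrite cardsU1 eA.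
  by rewrite Hc G0 mulr0 addr0 /G {1}(Fp_split e M) Hc Fp0 mulr0 addr0.
rewrite /G {1}(Fp_split e M) comp_polyD comp_polyM comp_polyX scalerDr.
by rewrite exprS; congr (_ + _); rewrite -scalerA scalerAr scalerAl qqE.
Qed.

Lemma G_coloop D r f : is_matroid D -> rk D r ->
  (forall B, B \in D -> #|B| = r -> f \in B) -> G r D = ('X - 1) * G r.-1 (con f D).
Proof.
move=> M R Hf; have [Hle [B HB Br]] := R.
have := Hf _ HB Br; case: r Hle Br R Hf => [|r] Hle Br R Hf fB.
  by move: Br; rewrite (cardsD1 f) fB.
rewrite /G /= (Fp_split f M) (coloop_eq M R Hf).
have -> : Fp (con f D) + 'X * Fp (con f D) = (1 + 'X) * Fp (con f D) by ring.
rewrite comp_polyM comp_polyD comp_polyC comp_polyX.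
by rewrite exprS -scalerA scalerAr scalerAl qqE1.
Qed.

End P.

Section Main.
Variable T : finType.
Implicit Types (I : {set {set T}}) (A B : {set T}).

Definition Concl I r := nonneg (G r I) /\ forall e : T, exists c, exists P, exists N,
  [/\ nonneg P, nonneg N, G r (del e I) = ('X - 1) ^+ c * P & G r.-1 (con e I) = Q c * P + N].

Lemma step I r :
  (forall I' r', (#|nl I'| < #|nl I|)%N -> is_matroid I' -> rk I' r' -> cfb I' r' -> Concl I' r') ->
  is_matroid I -> rk I r -> cfb I r -> Concl I r.
Proof.
move=> IH M R Hcf.
have Hb : forall e, e \in nl I -> exists c, exists P, exists N,
  [/\ nonneg P, nonneg N, G r (del e I) = ('X - 1) ^+ c * P & G r.-1 (con e I) = Q c * P + N].
  move=> e eI.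
  have He : [set e] \in I by move: eI; rewrite inE.
  have MK := mat_con M He; have RK := rk_con M R He; have CK := cf_con M R Hcf He.
  have MD := mat_del e M; have RD := rk_del e M R Hcf.
  case: (boolP (cfb (del e I) r)) => HcD.
    have [gD _] := IH _ r (nl_del eI) MD RD HcD.
    have [gK _] := IH _ r.-1 (nl_con M eI) MK RK CK.
    exists 0%N, (G r (del e I)), (G r.-1 (con e I)); split => //.
      by rewrite expr0 mul1r.
    by rewrite Q0 mul0r add0r.
  move: HcD; rewrite /cfb negb_forall => /existsP [f]; rewrite negb_exists => /forallP Hf'.
  have Hf : forall B, B \in del e I -> #|B| = r -> f \in B.
    move=> B HB Br; have := Hf' B; rewrite HB Br eqxx /=; by case: (f \in B).
  have [_ Hbk] := IH _ r.-1 (nl_con M eI) MK RK CK.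
  have [c [P [N [hP hN h1 h2]]]] := Hbk f.
  have h1' := h1; rewrite (delcon M R Hcf Hf) in h1'.
  exists c.+1, P, (('X + 1) * N); split => //.
  - exact: nonnegM nonnegX1 hN.
  - by rewrite (G_coloop MD RD Hf) h1' exprS mulrA.
  - have [RK1 _] := RK.
    rewrite (G_split f MK RK1) h1 h2 QS; ring.
have Hg : nonneg (G r I).
  case: (boolP [exists e, e \in nl I]).
    move=> /existsP [e eI]; have [c [P [N [hP hN h1 h2]]]] := Hb e eI.
    have [R1 _] := R.
    rewrite (G_split e M R1) h1 h2.
    have -> : ('X - 1) ^+ c * P + ('X + 1) * (Q c * P + N) = Q c.+1 * P + ('X + 1) * N.
      by rewrite QS; ring.
    apply: nonnegD; apply: nonnegM => //; [exact: Q_nonneg | exact: nonnegX1].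
  rewrite negb_exists => /forallP Hnl.
  have HI : I = [set set0].
    apply/setP => A; rewrite inE; apply/idP/eqP => [HA|->]; last by case: M.
    apply/setP => x; rewrite inE; apply/negP => xA.
    have := Hnl x; rewrite inE (mat_sub M HA) // sub1set //.
  have [_ [B HB Br]] := R.
  move: HB; rewrite HI inE => /eqP HB; rewrite HB cards0 in Br; subst r.
  rewrite /G /Fp big_set1 cards0 expr0 scale1r expr0 -polyC1 comp_polyC polyC1.
  exact: nonneg1.
split => // e.
case: (boolP (e \in nl I)) => [eI|eI]; first exact: Hb.
have Hd : del e I = I.
  apply/setP => A; rewrite inE; case: (boolP (A \in I)) => //= HA.
  apply/negP => eA; move: eI; rewrite inE (mat_sub M HA) // sub1set //.
have Hc : con e I = set0.
  apply/setP => A; rewrite !inE; apply/negP => /andP [_ /andP [_ H]].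
  by move: eI; rewrite inE (mat_sub M H) // subsetUl.
exists 0%N, (G r I), 0; split => //.
- exact: nonneg0.
- by rewrite Hd expr0 mul1r.
- by rewrite Hc G0 Q0 mul0r addr0.
Qed.

Lemma main n I r : (#|nl I| <= n)%N -> is_matroid I -> rk I r -> cfb I r -> Concl I r.
Proof.
elim: n I r => [|n IH] I r Hn M R Hcf; apply: step => // I' r' Hlt.
  by move: Hlt; rewrite leqn0 in Hn; rewrite (eqP Hn) ltn0.
apply: IH; by rewrite -ltnS (leq_trans Hlt).
Qed.

End Main.

Section Fin.
Variable T : finType.
Implicit Types (I : {set {set T}}) (A B : {set T}).

Lemma coloop_phase n I r : (r <= n)%N -> is_matroid I -> rk I r ->
  exists c, exists I', [/\ is_matroid I', rk I' (r - c)%N, cfb I' (r - c)%N &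
     Fp I = ('X + 1) ^+ c * Fp I'].
Proof.
elim: n I r => [|n IH] I r Hn M R.
- case: (boolP (cfb I r)) => Hcf.
    by exists 0%N, I; rewrite subn0 expr0 mul1r.
  exfalso; move: Hcf; rewrite /cfb negb_forall => /existsP [f].
  rewrite negb_exists => /forallP Hf'.
  have [_ [B HB Br]] := R.
  have := Hf' B; rewrite HB Br eqxx /= negbK.
  by move: Br; rewrite leqn0 in Hn; rewrite (eqP Hn) => /eqP; rewrite cards_eq0 => /eqP ->; rewrite inE.
case: (boolP (cfb I r)) => Hcf.
  by exists 0%N, I; rewrite subn0 expr0 mul1r.
move: Hcf; rewrite /cfb negb_forall => /existsP [f].
rewrite negb_exists => /forallP Hf'.
have Hf : forall B, B \in I -> #|B| = r -> f \in B.
  by move=> B HB Br; have := Hf' B; rewrite HB Br eqxx /=; case: (f \in B).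
have [_ [B HB Br]] := R.
have fB := Hf _ HB Br.
have He : [set f] \in I by apply: mat_sub M HB _; rewrite sub1set.
have MK := mat_con M He; have RK := rk_con M R He.
have Hr : (r.-1 <= n)%N.
  by move: Hn; case: r {Br RK R Hf Hf'} => //.
have [c [I' [M' R' C' E']]] := IH _ _ Hr MK RK.
exists c.+1, I'.
have -> : (r - c.+1 = r.-1 - c)%N by rewrite subnS -subn1 subnAC subn1.
split => //.
rewrite (Fp_split f M) (coloop_eq M R Hf) E' exprS; ring.
Qed.

Lemma coef_Fp I k : (Fp I)`_k = (#|[set S in I | #|S| == k]|)%:R.
Proof.
rewrite /Fp coef_sum.
have -> : \sum_(A in I) ('X^#|A| : {poly rat})`_k = \sum_(A in I | #|A| == k) 1.
  rewrite [RHS]big_mkcondr /=; apply: eq_bigr => A _; rewrite coefXn eq_sym.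
  by case: (_ == _).
rewrite -sumr_const; apply: eq_bigl => A; by rewrite inE.
Qed.

Lemma FOmE I : set0 \in I -> FOm I = Fp I.
Proof.
move=> H0; apply/polyP => k; rewrite coef_Fp /FOm coef_sum.
under eq_bigr do rewrite coefZ coefXn.
case: (ltnP k (dOm I).+1) => Hk.
  rewrite (bigD1 (Ordinal Hk)) //= eqxx mulr1 big1 ?addr0 //.
  move=> i /eqP ne; rewrite eq_sym; case: eqP => [h|]; last by rewrite mulr0.
  by exfalso; apply: ne; apply: val_inj; rewrite /= h.
rewrite big1; last first.
  by move=> i _; case: eqP => [h|]; [move: (ltn_ord i); rewrite -h ltnNge Hk | rewrite mulr0].
have -> : [set S in I | #|S| == k] = set0; last by rewrite cards0.
apply/setP => S; rewrite !inE; apply/negP => /andP [HS /eqP Sk].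
have := @leq_bigmax_cond _ (fun S => S \in I) (fun S => #|S|) S HS; rewrite -/(dOm I) Sk => h.
  by move: Hk; rewrite ltnNge h.
Qed.

End Fin.

Lemma X1_neq0 : ('X + 1 : {poly rat}) != 0.
Proof. by rewrite -size_poly_eq0 -polyC1 size_XaddC. Qed.

Lemma size_qq : size qq = 2.
Proof.
have := congr1 (fun p : {poly rat} => size p) qqE; rewrite /=; rewrite size_scale; last by rewrite oppr_eq0 pnatr_eq0.
by rewrite -polyC1 size_XaddC.
Qed.

Lemma qq1 : qq.[1] = -1.
Proof.
have := congr1 (fun p => p.[1]) qqE; rewrite /= hornerZ hornerD hornerX hornerC => h.
apply: (@mulfI _ (-2)); first by rewrite oppr_eq0 pnatr_eq0.
by rewrite h; ring.
Qed.

Theorem theorem6p4 (T : finType) (I : {set {set T}}) :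
  is_matroid I -> in_Jplus I.
Proof.
move=> M.
have H0 : set0 \in I by case: M.
have R : rk I (dOm I).
  split.
    by move=> A HA; exact: (@leq_bigmax_cond _ (fun S => S \in I) (fun S => #|S|) A HA).
  have Hc : (0 < #|(fun S => S \in I)|)%N by apply/card_gt0P; exists set0.
  have [B HB HBd] := @eq_bigmax_cond _ (fun S => S \in I) (fun S => #|S|) Hc.
  by exists B.
have [c [I' [M' R' C' E']]] := coloop_phase (leqnn _) M R.
move: R' C'; set r := (dOm I - c)%N => R' C'.
have [Hg _] := main (leqnn _) M' R' C'.
have HsF : size (Fp I') = r.+1.
  have [Rle [B HB Br]] := R'.
  apply/eqP; rewrite eqn_leq; apply/andP; split.
    apply/leq_sizeP => j Hj; rewrite coef_Fp.
    have -> : [set S in I' | #|S| == j] = set0; last by rewrite cards0.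
    apply/setP => S; rewrite !inE; apply/negP => /andP [HS /eqP Sj].
    by have := Rle _ HS; rewrite Sj leqNgt Hj.
  rewrite ltnNge; apply/negP => /leq_sizeP /(_ r (leqnn r)); rewrite coef_Fp => /eqP.
  rewrite pnatr_eq0 cards_eq0 => /eqP h.
  have : B \in [set S in I' | #|S| == r] by rewrite inE HB Br eqxx.
  by rewrite h inE.
have Hroot : (Fp I').[-1] != 0.
  apply/negP => /eqP Hz.
  have HG1 : (G r I').[1] = 0 by rewrite /G hornerZ horner_comp qq1 Hz mulr0.
  have HG : G r I' = 0.
    move: HG1; rewrite horner_coef => HG1.
    have Hi := psumr_eq0P (P := predT) _ HG1.
    have Hi' : forall i : 'I_(size (G r I')), (G r I')`_i * 1 ^+ i = 0.
      by move=> i; apply: Hi => // j _; rewrite expr1n mulr1; apply: Hg.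
    apply/polyP => i; rewrite coef0; case: (ltnP i (size (G r I'))) => [lt|ge].
      by have := Hi' (Ordinal lt); rewrite expr1n mulr1.
    by move/leq_sizeP: (leqnn (size (G r I'))) => /(_ i ge).
  move/eqP: HG; rewrite /G scaler_eq0 expf_eq0 oppr_eq0 pnatr_eq0 andbF /=.
  by rewrite comp_poly2_eq0 ?size_qq // -size_poly_eq0 HsF.
have Hmup : mup (-1) (FOm I) = c.
  rewrite FOmE // E' mupMl; last by rewrite rootE.
  have -> : ('X + 1 : {poly rat}) = 'X - (-1)%:P by rewrite polyCN opprK polyC1.
  by rewrite mup_XsubCX eqxx.
have Hft : Ftilde I = Fp I'.
  by rewrite /Ftilde Hmup FOmE // E' mulrC mulpK // expf_neq0 // X1_neq0.
have Ht : tOm I = r by rewrite /tOm Hft HsF.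
move=> k _; rewrite /JOm Ht Hft; exact: Hg k.
Qed.
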